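(* Let $u,v\in\mathbb{Z}[i]$ with $u+v\in O^I$, $uv\equiv0\pmod{1+i}$ and $\gcd(u,v)\in U$, and suppose the discriminant $(u+v)^2+4iuv$ of $z^2-(u+v)z-iuv=0$ is a square in $\mathbb{Z}[i]$. Then there exist $x,y\in\mathbb{Z}[i]$ with $\gcd(x,y)\in U$ such that $x-y=u+v$ and $xy=iuv$.
   Context: $\mathbb{Z}[i]$ is the ring of Gaussian integers, $U=\{1,-1,i,-i\}$ its unit group; $R(\alpha),I(\alpha)$ are real and imaginary parts. $\gcd(x,y)\in U$ means no common non-unit divisor. $O=\{\alpha: R(\alpha)+I(\alpha)\equiv1\pmod 2\}$, $O^I=\{\alpha\in O: R(\alpha)\equiv 1\pmod 4\}$. *)

(* Defs.v *)
From mathcomp Require Import all_boot all_algebra.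
Set Implicit Arguments. Unset Strict Implicit. Unset Printing Implicit Defensive.
Import GRing.Theory Num.Theory.
Local Open Scope ring_scope.

Record gaussint := GI { gre : int; gim : int }.

Definition gadd (a b : gaussint) : gaussint := GI (gre a + gre b) (gim a + gim b).
Definition gsub (a b : gaussint) : gaussint := GI (gre a - gre b) (gim a - gim b).
Definition gmul (a b : gaussint) : gaussint :=
  GI (gre a * gre b - gim a * gim b) (gre a * gim b + gim a * gre b).

Definition gi_one : gaussint := GI 1 0.
Definition gi_i : gaussint := GI 0 1.
Definition gi_four : gaussint := GI 4 0.
Definition gi_1pi : gaussint := GI 1 1.

Definition gdvd (d a : gaussint) : Prop := exists q : gaussint, a = gmul d q.

Definition gunit (u : gaussint) : Prop :=
  u = GI 1 0 \/ u = GI (-1) 0 \/ u = GI 0 1 \/ u = GI 0 (-1).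

Definition gcd_unit (x y : gaussint) : Prop :=
  forall d : gaussint, gdvd d x -> gdvd d y -> gunit d.

Definition in_O (a : gaussint) : Prop := ((gre a + gim a) %% 2)%Z = 1.
Definition in_OI (a : gaussint) : Prop := in_O a /\ ((gre a) %% 4)%Z = 1.

(* Main.v *)
Require Import Defs.
From mathcomp Require Import all_boot all_algebra.
From mathcomp Require Import zify ring.
Import GRing.Theory Num.Theory.
Local Open Scope ring_scope.

Definition gN (a : gaussint) : int := gre a * gre a + gim a * gim a.

Lemma gN_ge0 a : 0 <= gN a.
Proof. case: a => a1 a2; rewrite /gN /=; nia. Qed.

Lemma round_div (X n : int) : 0 < n -> exists q, -n <= 2*(X - n*q) <= n.
Proof. move=> hn; exists ((2*X + n) %/ (2*n))%Z. lia. Qed.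

Lemma euclid a b : 0 < gN b ->
  exists q r, a = gadd (gmul b q) r /\ gN r < gN b.
Proof.
case: a => a1 a2; case: b => b1 b2; rewrite /gN /= => hn.
set n := b1 * b1 + b2 * b2.
have [q1 H1] := round_div (a1 * b1 + a2 * b2) _ hn.
have [q2 H2] := round_div (a2 * b1 - a1 * b2) _ hn.
exists (GI q1 q2).
exists (GI (a1 - (b1 * q1 - b2 * q2)) (a2 - (b1 * q2 + b2 * q1))).
split; first by rewrite /gadd /gmul /=; congr GI; ring.
rewrite /=.
set r1 := a1 - _; set r2 := a2 - _.
set e1 := a1 * b1 + a2 * b2 - n * q1.
set e2 := a2 * b1 - a1 * b2 - n * q2.
have Hid : n * (r1 * r1 + r2 * r2) = e1 * e1 + e2 * e2.
  rewrite /r1 /r2 /e1 /e2 /n; ring.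
have E1 : 4 * (e1 * e1) <= n * n by move: H1; rewrite -/e1; nia.
have E2 : 4 * (e2 * e2) <= n * n by move: H2; rewrite -/e2; nia.
have : 2 * (r1 * r1 + r2 * r2) <= n by nia.
lia.
Qed.

Lemma gdvd_refl a : gdvd a a.
Proof. exists gi_one; case: a => a1 a2; rewrite /gmul /gi_one /=; congr GI; ring. Qed.

Lemma gdvd0 a : gdvd a (GI 0 0).
Proof. exists (GI 0 0); case: a => a1 a2; rewrite /gmul /=; congr GI; ring. Qed.

Lemma gdvd_mull d a x : gdvd d a -> gdvd d (gmul x a).
Proof.
case=> q ->; exists (gmul x q).
case: d q x => d1 d2 [q1 q2] [x1 x2]; rewrite /gmul /=; congr GI; ring.
Qed.

Lemma gdvd_add d a b : gdvd d a -> gdvd d b -> gdvd d (gadd a b).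
Proof.
case=> q ->; case=> q' ->; exists (gadd q q').
case: d q q' => d1 d2 [q1 q2] [x1 x2]; rewrite /gmul /gadd /=; congr GI; ring.
Qed.

Lemma gdvd_lin d a b x y : gdvd d a -> gdvd d b -> gdvd d (gadd (gmul x a) (gmul y b)).
Proof. by move=> ha hb; apply: gdvd_add; apply: gdvd_mull. Qed.

Lemma bezout_aux (k : nat) : forall a b, gN b < k%:Z ->
  exists g al be, gdvd g a /\ gdvd g b /\ g = gadd (gmul al a) (gmul be b).
Proof.
elim: k => [|k IH] a b hb.
  have := gN_ge0 b; lia.
have [hz|hp] : gN b = 0 \/ 0 < gN b by have := gN_ge0 b; lia.
  have Eb : b = GI 0 0.
    move: hz; case: b {hb} => b1 b2; rewrite /gN /= => hz.
    have h1 : b1 = 0 by nia.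
    have h2 : b2 = 0 by nia.
    by rewrite h1 h2.
  exists a, gi_one, (GI 0 0); split; first exact: gdvd_refl.
  split; first by rewrite Eb; exact: gdvd0.
  case: a b Eb {hz hb} => a1 a2 b Eb; rewrite Eb /gadd /gmul /gi_one /=; congr GI; ring.
have [q [r [Ea Hr]]] := euclid a _ hp.
have [g [al [be [Hgb [Hgr Eg]]]]] := IH b r ltac:(lia).
exists g, be, (gsub al (gmul be q)); split.
  rewrite Ea.
  have -> : gadd (gmul b q) r = gadd (gmul q b) (gmul gi_one r).
    case: b q r {Ea Hr Hgb Hgr Eg hb hp} => b1 b2 [q1 q2] [r1 r2];
    rewrite /gadd /gmul /gi_one /=; congr GI; ring.
  exact: gdvd_lin.
split=> //.
rewrite Eg Ea.
case: b q r al be {Ea Hr Hgb Hgr Eg hb hp} => b1 b2 [q1 q2] [r1 r2] [l1 l2] [m1 m2];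
rewrite /gadd /gsub /gmul /=; congr GI; ring.
Qed.

Lemma bezout a b : exists g al be, gdvd g a /\ gdvd g b /\ g = gadd (gmul al a) (gmul be b).
Proof. apply: (bezout_aux (absz (gN b)).+1); have := gN_ge0 b; lia. Qed.

Lemma gdvd_one_unit d : gdvd d gi_one -> gunit d.
Proof.
case=> q; case: d q => d1 d2 [q1 q2]; rewrite /gmul /gi_one /= => [[e1 e2]].
have HN : (d1 * d1 + d2 * d2) * (q1 * q1 + q2 * q2) = 1.
  have -> : (d1 * d1 + d2 * d2) * (q1 * q1 + q2 * q2) =
     (d1 * q1 - d2 * q2) * (d1 * q1 - d2 * q2) + (d1 * q2 + d2 * q1) * (d1 * q2 + d2 * q1) by ring.
  by rewrite -e1 -e2.
have h1 : d1 * d1 + d2 * d2 = 1.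
  have hD : 0 <= d1 * d1 + d2 * d2 by nia.
  have hQ : 0 <= q1 * q1 + q2 * q2 by nia.
  move: HN hD hQ; move: (d1 * d1 + d2 * d2) (q1 * q1 + q2 * q2) => D Q HN hD hQ.
  have hD1 : 1 <= D by move: HN; case: (D =P 0) => [->|]; [rewrite mul0r | lia].
  have hQ1 : 1 <= Q by move: HN; case: (Q =P 0) => [->|]; [rewrite mulr0 | lia].
  have : 0 <= D * (Q - 1) by apply: mulr_ge0; lia.
  rewrite mulrBr mulr1; lia.
have : -1 <= d1 <= 1 by nia.
have : -1 <= d2 <= 1 by nia.
move=> hd2 hd1.
have Hd1 : d1 = -1 \/ d1 = 0 \/ d1 = 1 by lia.
have Hd2 : d2 = -1 \/ d2 = 0 \/ d2 = 1 by lia.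
case: Hd1 h1 => [->|[->|->]]; case: Hd2 => [->|[->|->]] => h1;
rewrite /gunit; first [ (exfalso; lia) | (by left) | (by right; left) | (by right; right; left) | (by right; right; right) ].
Qed.

Lemma coprime_key u v d : gcd_unit u v ->
  gdvd d (gadd u v) -> gdvd d (gmul u v) -> gunit d.
Proof.
move=> hc hs hp.
have [g [al [be [Hgu [Hgv Eg]]]]] := bezout u v.
have Ug := hc g Hgu Hgv.
have hu2 : gdvd d (gmul u u).
  have -> : gmul u u = gadd (gmul u (gadd u v)) (gmul (GI (-1) 0) (gmul u v)).
    case: u v {hc hs hp Hgu Hgv Eg} => u1 u2 [v1 v2]; rewrite /gadd /gmul /=; congr GI; ring.
  exact: gdvd_lin.
have hv2 : gdvd d (gmul v v).
  have -> : gmul v v = gadd (gmul v (gadd u v)) (gmul (GI (-1) 0) (gmul u v)).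
    case: u v {hc hs hp Hgu Hgv Eg hu2} => u1 u2 [v1 v2]; rewrite /gadd /gmul /=; congr GI; ring.
  exact: gdvd_lin.
have hg2 : gdvd d (gmul g g).
  have -> : gmul g g = gadd (gmul (gmul al al) (gmul u u))
       (gmul gi_one (gadd (gmul (gmul (GI 2 0) (gmul al be)) (gmul u v)) (gmul (gmul be be) (gmul v v)))).
    rewrite Eg; case: u v al be {hc hs hp Hgu Hgv Eg hu2 hv2 Ug} => u1 u2 [v1 v2] [a1 a2] [b1 b2];
    rewrite /gadd /gmul /gi_one /=; congr GI; ring.
  apply: gdvd_lin => //; exact: gdvd_lin.
apply: gdvd_one_unit.
have -> : gi_one = gmul (gmul g g) (gmul g g).
  by case: Ug => [->|[->|[->|->]]]; rewrite /gmul /gi_one.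
have -> : gmul (gmul g g) (gmul g g) = gadd (gmul (gmul g g) (gmul g g)) (gmul gi_one (GI 0 0)).
  case: (gmul g g) => a b; rewrite /gadd /gmul /gi_one /=; congr GI; ring.
apply: gdvd_lin => //; exact: gdvd0.
Qed.

Theorem corollary4p22 (u v : gaussint) :
  in_OI (gadd u v) ->
  gdvd gi_1pi (gmul u v) ->
  gcd_unit u v ->
  (exists w : gaussint,
     gmul w w = gadd (gmul (gadd u v) (gadd u v))
                     (gmul gi_four (gmul gi_i (gmul u v)))) ->
  exists x y : gaussint,
    gcd_unit x y /\ gsub x y = gadd u v /\ gmul x y = gmul gi_i (gmul u v).
Proof.
move=> hO _ hc [w Hw].
suff [x [y [E1 E2]]] : exists x y, gsub x y = gadd u v /\ gmul x y = gmul gi_i (gmul u v).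
  exists x, y; split; last by split.
  move=> d hx hy.
  apply: (@coprime_key u v d hc).
    rewrite -E1.
    have -> : gsub x y = gadd (gmul gi_one x) (gmul (GI (-1) 0) y).
      case: x y {E1 E2 hx hy} => x1 x2 [y1 y2]; rewrite /gadd /gsub /gmul /gi_one /=; congr GI; ring.
    exact: gdvd_lin.
  have -> : gmul u v = gmul (GI 0 (-1)) (gmul x y).
    rewrite E2; case: (gmul u v) => a b; rewrite /gmul /gi_i /=; congr GI; ring.
  apply: gdvd_mull.
  have -> : gmul x y = gadd (gmul y x) (gmul gi_one (GI 0 0)).
    case: x y {E1 E2 hx hy} => x1 x2 [y1 y2]; rewrite /gadd /gmul /gi_one /=; congr GI; ring.
  apply: gdvd_lin => //; exact: gdvd0.
move: hO Hw.
set P := gmul gi_i (gmul u v).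
case: P => P1 P2.
case: (gadd u v) => c d; case: w => a b.
rewrite /in_OI /in_O /gadd /gmul /gi_four /= => [[h1 h2]] [Ea Eb].
have Hc : exists m, c = 4 * m + 1 by exists (c %/ 4)%Z; lia.
have Hd : exists k, c + d = 2 * k + 1 by exists ((c + d) %/ 2)%Z; lia.
case: Hc => m Hc; case: Hd => k Hd.
have Ha : exists a' ra, a = 2 * a' + ra /\ (ra = 0 \/ ra = 1) by exists (a %/ 2)%Z, (a %% 2)%Z; lia.
have Hb : exists b' rb, b = 2 * b' + rb /\ (rb = 0 \/ rb = 1) by exists (b %/ 2)%Z, (b %% 2)%Z; lia.
case: Ha => a' [ra [Ha Hra]]; case: Hb => b' [rb [Hb Hrb]].
have Hd' : d = 2 * k - 4 * m by lia.
have [Hra1 Hrb0] : ra = 1 /\ rb = 0.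
  move: Ea; rewrite Ha Hb Hc Hd'.
  case: Hra => ->; case: Hrb => -> Ea; lia.
exists (GI (c + divz (a - c) 2) (d + divz (b - d) 2)), (GI (divz (a - c) 2) (divz (b - d) 2)).
have Ht1 : a = c + 2 * (divz (a - c) 2) by lia.
have Ht2 : b = d + 2 * (divz (b - d) 2) by lia.
move: (divz (a - c) 2) (divz (b - d) 2) Ht1 Ht2 => t1 t2 Ht1 Ht2.
split; first by rewrite /gsub /=; congr GI; ring.
rewrite /gmul /=; congr GI.
  move: Ea; rewrite Ht1 Ht2 => Ea; lia.
move: Eb; rewrite Ht1 Ht2 => Eb; lia.
Qed.
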